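(* Let $m\ge1$, $q=2^m$, let $n$ be even, and let $L(x)=L_k\big(x^{2^k}\big)+L_l\big(x^{2^l}\big)$, where $L_k,L_l$ are $q^2$-linear polynomials over $\mathbb F_{q^n}$ and $k,l$ are integers with $0\le k<l<2m$. Let $e=\gcd(l-k,2m)$, $a=L_k(1)$, $b=L_l(1)$ and $\delta=a^{q^2}b+ab^{q^2}$. Then $\ker(\mathrm{Tr}_2\circ L^\prime)\subseteq\ker\mathrm{Tr}$ if and only if one of the following holds: (1) $l-k=m$, $a\notin\mathbb F_{q^2}$, $\delta\ne0$ and \[\delta^q\big(a^{q^2}+a\big)+\delta\big(b^{q^3}+b^q\big)=\delta^q\big(b^{q^2}+b\big)+\delta\big(a^{q^3}+a^q\big)=0;\] (2) $a,b\in\mathbb F_{q^2}$ and $a^{\frac{q^2-1}{2^e-1}}\ne b^{\frac{q^2-1}{2^e-1}}$; (3) $e$ divides $m$, $a,b\in\mathbb F_{q^2}^*$ and $a^{\frac{2^{l-k}(q-1)}{2^e-1}}=b^{\frac{q-1}{2^e-1}}$.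
   Context: $\mathrm{Tr}$ denotes the trace map of $\mathbb F_{q^n}$ over $\mathbb F_q$ and $\mathrm{Tr}_2$ the trace map of $\mathbb F_{q^n}$ over $\mathbb F_{q^2}$. A $q^2$-linear polynomial over $\mathbb F_{q^n}$ has the form $\sum_{j=0}^{n/2-1}c_jx^{q^{2j}}$ with $c_j\in\mathbb F_{q^n}$. For a $2$-linear polynomial $L(x)=\sum_{j=0}^{mn-1}a_jx^{2^j}$ over $\mathbb F_{q^n}$, its adjoint is $L^\prime(x)=\sum_j(a_jx)^{2^{-j}}$, where $y\mapsto y^{2^{-j}}$ is the inverse of $y\mapsto y^{2^j}$ on $\mathbb F_{q^n}$. Polynomials are regarded as maps on $\mathbb F_{q^n}$; $\ker$ denotes the kernel of an additive map. *)

(* Defs.v *)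
From mathcomp Require Import all_boot all_algebra all_field.
Set Implicit Arguments. Unset Strict Implicit. Unset Printing Implicit Defensive.
Import GRing.Theory.
Local Open Scope ring_scope.

(* F plays the role of F_{q^n}, q = 2^m (any finite field of order 2^(m n)). *)
Section Defs.
Variable F : finFieldType.
Variables m n : nat.

Definition qq : nat := (2 ^ m)%N.

Definition Tr (x : F) : F := \sum_(i < n) x ^+ (qq ^ i).

Definition Tr2 (x : F) : F := \sum_(i < n./2) x ^+ (qq ^ (2 * i)).

Definition qlin (c : nat -> F) (y : F) : F :=
  \sum_(j < n./2) c j * y ^+ (qq ^ (2 * j)).

Definition Lpoly (ck cl : nat -> F) (k l : nat) (x : F) : F :=
  qlin ck (x ^+ (2 ^ k)) + qlin cl (x ^+ (2 ^ l)).

(* coefficient a_j of x^{2^j} in L, 0 <= j < m n, when k, l < 2m, k <> l *)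
Definition Lcoef (ck cl : nat -> F) (k l : nat) (j : nat) : F :=
  if (j %% (2 * m) == k)%N then ck (j %/ (2 * m))%N
  else if (j %% (2 * m) == l)%N then cl (j %/ (2 * m))%N
  else 0.

(* y^{2^{-j}}: the inverse of y |-> y^{2^j} on F_{q^n}, for j < m n *)
Definition frob_inv (j : nat) (y : F) : F := y ^+ (2 ^ (m * n - j)).

(* adjoint L'(x) = sum_j (a_j x)^{2^{-j}} of L = sum_{j<mn} a_j x^{2^j} *)
Definition Ladj (ck cl : nat -> F) (k l : nat) (x : F) : F :=
  \sum_(j < m * n) frob_inv j (Lcoef ck cl k l j * x).

End Defs.

(* Main.v *)
Require Import Defs.
From mathcomp Require Import all_boot all_algebra all_field.
From mathcomp Require Import zify ring.
Set Implicit Arguments. Unset Strict Implicit. Unset Printing Implicit Defensive.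
Import GRing.Theory.
Local Open Scope ring_scope.

Section Basics.
Variable F : finFieldType.
Variable M : nat.
Hypothesis hF : #|F| = (2 ^ M)%N.

Lemma ch2 : (2%N \in [pchar F]).
Proof. exact: (card_finPcharP hF). Qed.

Lemma add2 (x : F) : x + x = 0.
Proof. by rewrite -mulr2n -mulr_natr (pcharf0 ch2) mulr0. Qed.

Lemma oppE (x : F) : - x = x.
Proof. by apply/eqP; rewrite eq_sym -subr_eq0 opprK add2. Qed.

Lemma sqrD (x y : F) : (x + y) ^+ 2 = x ^+ 2 + y ^+ 2.
Proof. by rewrite sqrrD mulr2n add2 addr0. Qed.

Lemma frD i (x y : F) : (x + y) ^+ (2 ^ i) = x ^+ (2 ^ i) + y ^+ (2 ^ i).
Proof.
elim: i x y => [|i IH] x y; first by rewrite !expn0 !expr1.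
by rewrite expnS !exprM sqrD IH.
Qed.

Lemma frE i j (x : F) : x ^+ (2 ^ (i + j)) = (x ^+ (2 ^ i)) ^+ (2 ^ j).
Proof. by rewrite expnD exprM. Qed.

Lemma fr0 i : (0 : F) ^+ (2 ^ i) = 0.
Proof. by rewrite expr0n expn_eq0. Qed.

Lemma fr1 i : (1 : F) ^+ (2 ^ i) = 1.
Proof. by rewrite expr1n. Qed.

Lemma fr_sum j (I : Type) (r : seq I) (P : pred I) (f : I -> F) :
  (\sum_(i <- r | P i) f i) ^+ (2 ^ j) = \sum_(i <- r | P i) (f i) ^+ (2 ^ j).
Proof.
by apply: (big_morph (fun x : F => x ^+ (2 ^ j))); [move=> x y; exact: frD|exact: fr0].
Qed.

Lemma fr_eq0 i (x : F) : (x ^+ (2 ^ i) == 0) = (x == 0).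
Proof. by rewrite expf_eq0 expn_gt0. Qed.

Lemma fr_inj i (x y : F) : x ^+ (2 ^ i) = y ^+ (2 ^ i) -> x = y.
Proof.
by move=> h; apply/eqP; rewrite -subr_eq0 -(fr_eq0 i) oppE frD h add2.
Qed.

Lemma fr_card (x : F) : x ^+ (2 ^ M) = x.
Proof. by rewrite -hF expf_card. Qed.

Definition G N := [set x : F | x ^+ (2 ^ N) == x].

Lemma inG N x : (x \in G N) = (x ^+ (2 ^ N) == x).
Proof. by rewrite inE. Qed.

Lemma G0 N : 0 \in G N. Proof. by rewrite inG fr0. Qed.
Lemma G1 N : 1 \in G N. Proof. by rewrite inG fr1. Qed.
Lemma GD N x y : x \in G N -> y \in G N -> x + y \in G N.
Proof. by rewrite !inG frD => /eqP-> /eqP->. Qed.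
Lemma GM N x y : x \in G N -> y \in G N -> x * y \in G N.
Proof. by rewrite !inG exprMn => /eqP-> /eqP->. Qed.
Lemma GV N x : x \in G N -> x^-1 \in G N.
Proof. by rewrite !inG exprVn => /eqP->. Qed.
Lemma GX N x i : x \in G N -> x ^+ i \in G N.
Proof. by rewrite !inG -exprM mulnC exprM => /eqP->. Qed.
Lemma GT x : x \in G M.
Proof. by rewrite inG fr_card. Qed.

Lemma G_mul N j x : x \in G N -> x ^+ (2 ^ (N * j)) = x.
Proof.
rewrite inG => /eqP hx; elim: j => [|j IH]; first by rewrite muln0 expr1.
by rewrite mulnS addnC frE IH.
Qed.

Lemma G_dvd N s x : (s %| N)%N -> x \in G s -> x \in G N.
Proof. by move=> /dvdnP[j ->] hx; rewrite inG mulnC G_mul. Qed.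

Lemma G_mod N i x : x \in G N -> x ^+ (2 ^ i) = x ^+ (2 ^ (i %% N)).
Proof. by move=> hx; rewrite {1}(divn_eq i N) frE mulnC G_mul. Qed.

Lemma G_fr N i x : x \in G N -> x ^+ (2 ^ i) \in G N.
Proof. exact: GX. Qed.

Lemma G_gcd s t x : (0 < s)%N -> x \in G s -> x \in G t -> x \in G (gcdn s t).
Proof.
move=> s0 hs ht; have [u _ /dvdnP[c hc]] := Bezoutl t s0.
have := G_mul c hs; rewrite mulnC -hc addnC frE mulnC (G_mul _ ht) => h.
by rewrite inG h.
Qed.


Lemma roots_le N (r : {poly F}) (A : {set F}) :
  (size r <= N)%N -> (forall x, x \in A -> x ^+ N + r.[x] = 0) -> (#|A| <= N)%N.
Proof.
move=> hs hA; set p := 'X^N + r.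
have sp : size p = N.+1 by rewrite /p size_polyDl size_polyXn // ltnS.
have p0 : p != 0 by rewrite -size_poly_eq0 sp.
have := max_poly_roots p0 (rs := enum A).
rewrite enum_uniq cardE sp ltnS; apply => //.
by apply/allP => x; rewrite mem_enum => xA; rewrite /root /p hornerD hornerXn hA.
Qed.

Lemma card_fib (A Kr : {set F}) (f : F -> F) (op : F -> F -> F) :
  (forall x0, x0 \in A -> injective (op x0)) ->
  (forall x0, x0 \in A -> [set x in A | f x == f x0] = [set op x0 z | z in Kr]) ->
  #|A| = (#|f @: A| * #|Kr|)%N.
Proof.
move=> inj hfib.
rewrite -sum1_card (partition_big f (mem (f @: A))); last first.
  by move=> x xA; apply: imset_f.
rewrite -sum_nat_const; apply: eq_bigr => y /imsetP[x0 x0A ->].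
by rewrite sum1_card -(card_imset Kr (inj x0 x0A)) -hfib // cardsE.
Qed.

Definition trs s r (x : F) := \sum_(i < r) x ^+ (2 ^ (s * i)).

Lemma trsD s r x y : trs s r (x + y) = trs s r x + trs s r y.
Proof. by rewrite /trs -big_split; apply: eq_bigr => i _; rewrite frD. Qed.

Lemma trs0 s r : trs s r 0 = 0.
Proof. by rewrite /trs big1 // => i _; rewrite fr0. Qed.

Lemma trs_sum s r (I : Type) (l : seq I) (P : pred I) (f : I -> F) :
  trs s r (\sum_(i <- l | P i) f i) = \sum_(i <- l | P i) trs s r (f i).
Proof. by apply: (big_morph (trs s r)); [exact: trsD|exact: trs0]. Qed.

Lemma trs_fr s r j x : trs s r (x ^+ (2 ^ j)) = (trs s r x) ^+ (2 ^ j).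
Proof.
by rewrite /trs fr_sum; apply: eq_bigr => i _; rewrite -!frE addnC.
Qed.

Lemma sum_rot r (g : nat -> F) : g r = g 0%N ->
  \sum_(i < r) g i.+1 = \sum_(i < r) g i.
Proof.
case: r => [|r] h; first by rewrite !big_ord0.
by rewrite big_ord_recr big_ord_recl /= h addrC.
Qed.

Lemma trs_rot s r x : x \in G (s * r) -> (trs s r x) ^+ (2 ^ s) = trs s r x.
Proof.
move=> hx; rewrite /trs fr_sum.
rewrite (eq_bigr (fun i : 'I_r => x ^+ (2 ^ (s * i.+1)))); last first.
  by move=> i _; rewrite -frE mulnS addnC.
have := @sum_rot r (fun i => x ^+ (2 ^ (s * i))); apply.
by move=> /=; rewrite muln0 expn0 expr1 -{2}(G_mul 1 hx) muln1.
Qed.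

Lemma trs_G s r x : x \in G (s * r) -> trs s r x \in G s.
Proof. by move=> hx; rewrite inG trs_rot. Qed.

Lemma tr_onto s r : (0 < s)%N -> (0 < r)%N -> #|G (s * r)| = (2 ^ (s * r))%N ->
  trs s r @: G (s * r) = G s /\ #|G s| = (2 ^ s)%N.
Proof.
move=> s0 r0 hG.
set A := G (s * r); set f := trs s r; set Kr := [set x in A | f x == 0].
have hfib : #|A| = (#|f @: A| * #|Kr|)%N.
  apply: (card_fib (op := fun x0 z => x0 + z)) => [x0 _|x0 x0A].
    exact: addrI.
  apply/setP => x; apply/setIdP/imsetP.
    move=> [xA /eqP fx]; exists (x + x0); last by rewrite addrCA add2 addr0.
    by apply/setIdP; split; [exact: GD|rewrite /f trsD -/f fx add2].
  move=> [z] /setIdP[zA /eqP fz] ->; split; first exact: GD.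
  by rewrite /f trsD -/f fz addr0.
have hK : (#|Kr| <= 2 ^ (s * r.-1))%N.
  apply: (roots_le (r := \sum_(i < r.-1) 'X^(2 ^ (s * i)))).
    apply: (leq_trans (size_sum _ _ _)); apply/bigmax_leqP => i _.
    rewrite size_polyXn ltn_exp2l // ltn_mul2l s0 /=; exact: ltn_ord.
  move=> x; rewrite inE => /andP[_ /eqP].
  rewrite /f /trs -(prednK r0) big_ord_recr /= => h.
  rewrite horner_sum addrC; apply: (etrans _ h); congr (_ + _); apply: eq_bigr => i _; by rewrite hornerXn.
have hGs : (#|G s| <= 2 ^ s)%N.
  apply: (roots_le (r := - 'X)).
    by rewrite size_polyN size_polyX (@leq_trans (2 ^ 1)) // leq_exp2l.
  by move=> x; rewrite inG => /eqP h; rewrite hornerN hornerX h subrr.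
have sub : f @: A \subset G s.
  by apply/subsetP => y /imsetP[x xA ->]; exact: trs_G.
have hI : (2 ^ s <= #|f @: A|)%N.
  have e1 : (2 ^ (s * r) = 2 ^ s * 2 ^ (s * r.-1))%N.
    by rewrite -expnD -mulnS prednK.
  move: hfib hK; rewrite hG e1.
  have p1 : (0 < 2 ^ s)%N by rewrite expn_gt0.
  have p2 : (0 < 2 ^ (s * r.-1))%N by rewrite expn_gt0.
  move: p1 p2; set P := (2 ^ s)%N; set Q := (2 ^ (s * r.-1))%N.
  move=> p1 p2 h1 h2; nia.
split; first by apply/eqP; rewrite eqEcard sub (leq_trans hGs hI).
by apply/eqP; rewrite eqn_leq hGs (leq_trans hI (subset_leq_card sub)).
Qed.


Definition T N x := trs 1 N x.

Lemma T_G1 N x : x \in G N -> T N x \in G 1.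
Proof. by move=> hx; apply: trs_G; rewrite mul1n. Qed.

Lemma T01 N x : x \in G N -> T N x = 0 \/ T N x = 1.
Proof.
move/T_G1; rewrite inG expn1 expr2 => /eqP h.
have : T N x * (T N x - 1) == 0 by rewrite mulrBr h mulr1 subrr.
by rewrite mulf_eq0 subr_eq0 => /orP[/eqP->|/eqP->]; [left|right].
Qed.

Lemma T_fr N j x : x \in G N -> T N (x ^+ (2 ^ j)) = T N x.
Proof.
by move=> hx; rewrite /T trs_fr -[j]mul1n G_mul //; exact: T_G1.
Qed.

Lemma TD N x y : T N (x + y) = T N x + T N y.
Proof. exact: trsD. Qed.

Lemma T0 N : T N 0 = 0.
Proof. exact: trs0. Qed.

Lemma T_adj s r x w : x \in G (s * r) -> w \in G (s * r) ->
  T (s * r) (trs s r x * w) = T (s * r) (x * trs s r w).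
Proof.
move=> hx hw; rewrite /trs mulr_suml mulr_sumr /T !trs_sum -!/(T _ _).
have e : forall i : 'I_r, T (s * r) (x ^+ (2 ^ (s * i)) * w)
   = T (s * r) (x * w ^+ (2 ^ (s * (r - i)))).
  move=> i; rewrite -[RHS](T_fr (s * i)); last by apply: GM => //; exact: G_fr.
  have hw1 := G_mul 1 hw; rewrite muln1 in hw1.
  by rewrite exprMn -frE -mulnDr subnK ?(ltnW (ltn_ord i)) // hw1.
rewrite (eq_bigr _ (fun i _ => e i)) (reindex_inj rev_ord_inj) /=.
rewrite (eq_bigr (fun i : 'I_r => T (s * r) (x * w ^+ (2 ^ (s * i.+1))))); last first.
  by move=> i _; rewrite subKn.
have := @sum_rot r (fun i => T (s * r) (x * w ^+ (2 ^ (s * i)))); apply.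
by rewrite /= muln0 expn0 expr1 -{2}(G_mul 1 hw) muln1.
Qed.

Lemma T_nd N z : (0 < N)%N -> #|G N| = (2 ^ N)%N -> z \in G N -> z != 0 ->
  exists2 y, y \in G N & T N (z * y) = 1.
Proof.
move=> N0 hG hz z0.
have hG1 : #|G (1 * N)| = (2 ^ (1 * N))%N by rewrite mul1n.
have [h _] := @tr_onto 1 N isT N0 hG1.
have : (1 : F) \in trs 1 N @: G (1 * N) by rewrite h G1.
case/imsetP=> y0; rewrite mul1n => hy0 e.
exists (z^-1 * y0); first by apply: GM => //; exact: GV.
by rewrite mulrA divff // mul1r /T -e.
Qed.

Lemma trs_ker s r z : (0 < s)%N -> (0 < r)%N -> #|G (s * r)| = (2 ^ (s * r))%N ->
  z \in G (s * r) ->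
  (trs s r z = 0 <-> forall y, y \in G s -> T (s * r) (z * y) = 0).
Proof.
move=> s0 r0 hG hz; split.
  move=> h y hy; have [e _] := tr_onto s0 r0 hG.
  move: hy; rewrite -e => /imsetP[w hw ->].
  by rewrite -T_adj // h mul0r T0.
move=> h; apply/eqP; apply/negP => /negP nz.
have hu : trs s r z \in G (s * r).
  by apply: (G_dvd (dvdn_mulr r (dvdnn s))); exact: trs_G.
have N0 : (0 < s * r)%N by rewrite muln_gt0 s0 r0.
have [w hw hT] := T_nd N0 hG hu nz.
move: hT; rewrite T_adj // h; last exact: trs_G.
by move/eqP; rewrite eq_sym oner_eq0.
Qed.

Definition perp N (S : {set F}) :=
  [set x in G N | [forall y in S, T N (x * y) == 0]].

Definition sgrp N (S : {set F}) :=
  [/\ S \subset G N, 0 \in S & forall x y, x \in S -> y \in S -> x + y \in S].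

Lemma perp_sgrp N S : sgrp N (perp N S).
Proof.
split.
- by apply/subsetP => x /setIdP[].
- by apply/setIdP; split; [exact: G0|apply/forall_inP => y _; rewrite mul0r T0].
- move=> x y /setIdP[hx /forall_inP px] /setIdP[hy /forall_inP py].
  apply/setIdP; split; first exact: GD.
  by apply/forall_inP => z hz; rewrite mulrDl TD (eqP (px z hz)) (eqP (py z hz)) addr0.
Qed.

Lemma sum_shift (A : {set F}) (g : F -> int) y0 :
  y0 \in A -> (forall x y, x \in A -> y \in A -> x + y \in A) ->
  \sum_(y in A) g y = \sum_(y in A) g (y + y0).
Proof.
move=> hy0 hA; rewrite (reindex_inj (addIr y0)) /=; apply: eq_bigl => y.
apply/idP/idP => h; last exact: hA.
by rewrite -[y](addrK_pchar2 ch2 y0) hA.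
Qed.

Definition sg N (x : F) : int := if T N x == 0 then 1 else -1.

Lemma sgD N x y : x \in G N -> y \in G N -> sg N (x + y) = sg N x * sg N y.
Proof.
move=> hx hy; rewrite /sg TD.
case: (T01 hx) => ->; case: (T01 hy) => ->;
  rewrite ?addr0 ?add0r ?add2 ?eqxx ?oner_eq0 //.
Qed.

Lemma card_perp N S : (0 < N)%N -> #|G N| = (2 ^ N)%N -> sgrp N S ->
  (#|S| * #|perp N S| = 2 ^ N)%N.
Proof.
move=> N0 hG [sS S0 Sadd].
have GNadd : forall x y, x \in G N -> y \in G N -> x + y \in G N by move=> x y; exact: GD.
have in1 : forall x, x \in G N ->
    \sum_(y in S) sg N (x * y) = if x \in perp N S then (#|S| : int) else 0.
  move=> x hx; case: ifP => hp.
    move: hp => /setIdP[_ /forall_inP hp].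
    rewrite (eq_bigr (fun _ => 1)); first by rewrite GRing.sumr_const natz.
    by move=> y hy; rewrite /sg (eqP (hp y hy)) eqxx.
  have : ~~ [forall y in S, T N (x * y) == 0].
    by apply: contraFN hp => h; apply/setIdP.
  rewrite negb_forall_in => /existsP[y0 /andP[hy0 ny0]].
  set Σ := (X in X = _).
  have : Σ = - Σ.
    rewrite {1}/Σ (sum_shift _ hy0 Sadd) /Σ -sumrN.
    apply: eq_bigr => y hy; rewrite mulrDr sgD; first last.
    - by apply: GM => //; apply: (subsetP sS).
    - by apply: GM => //; apply: (subsetP sS).
    have -> : sg N (x * y0) = -1 by rewrite /sg (negbTE ny0).
    by rewrite mulrN1.
  by lia.
have in2 : forall y, y \in S ->
    \sum_(x in G N) sg N (x * y) = if y == 0 then ((2 ^ N)%N : int) else 0.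
  move=> y hy; case: eqP => [->|/eqP ny].
    rewrite (eq_bigr (fun _ => 1)); first by rewrite GRing.sumr_const hG natz.
    by move=> x _; rewrite /sg mulr0 T0 eqxx.
  have hyG : y \in G N by apply: (subsetP sS).
  have [x1 hx1 T1] := T_nd N0 hG hyG ny.
  set Σ := (X in X = _).
  have : Σ = - Σ.
    rewrite {1}/Σ (sum_shift _ hx1 GNadd) /Σ -sumrN.
    apply: eq_bigr => x hx; rewrite mulrDl sgD; first last.
    - by apply: GM.
    - by apply: GM.
    have -> : sg N (x1 * y) = -1 by rewrite /sg mulrC T1 oner_eq0.
    by rewrite mulrN1.
  by lia.
have e1 : \sum_(x in G N) \sum_(y in S) sg N (x * y) = ((#|perp N S| * #|S|)%N : int).
  rewrite (eq_bigr _ in1) -big_mkcondr.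
  rewrite (eq_bigl (fun x => x \in perp N S)); last first.
    by move=> x /=; apply/andP/idP => [[]//|h]; split=> //; move: h => /setIdP[].
  by rewrite GRing.sumr_const -mulr_natr natz mulnC PoszM.
have e2 : \sum_(x in G N) \sum_(y in S) sg N (x * y) = ((2 ^ N)%N : int).
  rewrite exchange_big /= (eq_bigr _ in2) (bigD1 0) //= eqxx big1 ?addr0 //.
  by move=> y /andP[_ /negbTE ->].
by apply/eqP; rewrite mulnC -eqz_nat -e1 e2.
Qed.


Lemma perp_anti N (S1 S2 : {set F}) : S1 \subset S2 -> perp N S2 \subset perp N S1.
Proof.
move=> /subsetP h; apply/subsetP => x /setIdP[hx /forall_inP hp].
by apply/setIdP; split=> //; apply/forall_inP => y hy; apply: hp; apply: h.
Qed.

Lemma perp_perp N S : (0 < N)%N -> #|G N| = (2 ^ N)%N -> sgrp N S ->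
  perp N (perp N S) = S.
Proof.
move=> N0 hG hS; have hP := perp_sgrp N S.
have c1 := card_perp N0 hG hS; have c2 := card_perp N0 hG hP.
have sub : S \subset perp N (perp N S).
  case: hS => sS _ _; apply/subsetP => y hy; apply/setIdP; split.
    exact: (subsetP sS).
  by apply/forall_inP => x /setIdP[_ /forall_inP h]; rewrite mulrC h.
apply/eqP; rewrite eq_sym eqEcard sub /=.
have p0 : (0 < #|perp N S|)%N.
  by case: hP => _ h0 _; apply/card_gt0P; exists 0.
move: c1 c2; rewrite mulnC => c1; rewrite -c1 => /eqP; rewrite eqn_pmul2l //.
by move/eqP->.
Qed.

Lemma perp_iff N (S1 S2 : {set F}) : (0 < N)%N -> #|G N| = (2 ^ N)%N -> sgrp N S1 -> sgrp N S2 ->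
  (S1 \subset S2) = (perp N S2 \subset perp N S1).
Proof.
move=> N0 hG h1 h2; apply/idP/idP; first exact: perp_anti.
by move/(perp_anti N); rewrite !perp_perp.
Qed.


Lemma cardG_le s : (0 < s)%N -> (#|G s| <= 2 ^ s)%N.
Proof.
move=> s0; apply: (roots_le (r := - 'X)).
  by rewrite size_polyN size_polyX (@leq_trans (2 ^ 1)) // leq_exp2l.
by move=> x; rewrite inG => /eqP h; rewrite hornerN hornerX h subrr.
Qed.

Lemma GM_all : #|G M| = (2 ^ M)%N.
Proof.
rewrite -hF; apply: eq_card => x; by rewrite GT.
Qed.

Lemma cardG s : (0 < s)%N -> (0 < M)%N -> (s %| M)%N -> #|G s| = (2 ^ s)%N.
Proof.
move=> s0 M0 /dvdnP[r er].
have r0 : (0 < r)%N by move: M0; rewrite er muln_gt0 => /andP[].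
have h : #|G (s * r)| = (2 ^ (s * r))%N by rewrite mulnC -er GM_all.
by case: (tr_onto s0 r0 h).
Qed.

Lemma G_sub_card s t : (0 < s)%N -> (0 < t)%N -> (0 < M)%N -> (s %| M)%N ->
  G s \subset G t -> (s %| t)%N.
Proof.
move=> s0 t0 M0 sM /subsetP sub.
have g0 : (0 < gcdn s t)%N by rewrite gcdn_gt0 s0.
have sub2 : G s \subset G (gcdn s t).
  by apply/subsetP => x hx; apply: G_gcd => //; apply: sub.
have := subset_leq_card sub2; rewrite cardG // => h.
have := leq_trans h (cardG_le g0); rewrite leq_exp2l // => h2.
have := dvdn_gcdl s t => /dvdn_leq => /(_ s0) h3.
by apply/gcdn_idPl; apply/eqP; rewrite eqn_leq h3 h2.
Qed.

End Basics.

Lemma dvd_pow_sub1 s j : (2 ^ s - 1 %| 2 ^ (s * j) - 1)%N.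
Proof.
elim: j => [|j IH]; first by rewrite muln0 subnn dvdn0.
have X0 : (0 < 2 ^ s)%N by rewrite expn_gt0.
have Y0 : (0 < 2 ^ (s * j))%N by rewrite expn_gt0.
have -> : (2 ^ (s * j.+1) - 1 = 2 ^ s * (2 ^ (s * j) - 1) + (2 ^ s - 1))%N.
  rewrite mulnS expnD; move: X0 Y0; set X := (2 ^ s)%N; set Y := (2 ^ (s * j))%N.
  move=> X0 Y0; nia.
by rewrite dvdn_add // dvdn_mull.
Qed.

Lemma dvd_pow_sub1' s t : (s %| t)%N -> (2 ^ s - 1 %| 2 ^ t - 1)%N.
Proof. by move=> /dvdnP[j ->]; rewrite mulnC dvd_pow_sub1. Qed.

From mathcomp Require Import all_boot all_algebra all_field.
From mathcomp Require Import zify ring.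
Set Implicit Arguments. Unset Strict Implicit. Unset Printing Implicit Defensive.
Import GRing.Theory.
Local Open Scope ring_scope.

Lemma sum_mod (R : zmodType) p hh k (f : nat -> R) : (k < p)%N ->
  \sum_(j < hh * p) (if (j %% p == k)%N then f (j %/ p)%N else 0) = \sum_(i < hh) f i.
Proof.
move=> kp; have p0 : (0 < p)%N by apply: leq_ltn_trans kp.
rewrite -(big_mkord xpredT (fun j => if (j %% p == k)%N then f (j %/ p)%N else 0)).
rewrite big_nat_mul big_mkord; apply: eq_bigr => i _.
have := big_addn 0 (i.+1 * p) (i * p) xpredT (fun j => if (j %% p == k)%N then f (j %/ p)%N else 0).
rewrite add0n => ->; rewrite mulSn addnK big_mkord.
rewrite (eq_bigr (fun t : 'I_p => if (t == k :> nat) then f i else 0)); last first.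
  move=> t _; rewrite addnC modnMDl divnMDl // modn_small // divn_small //.
  by rewrite addn0.
by rewrite -big_mkcond (@big_ord1_eq _ _ _ (fun _ => f i)) kp.
Qed.

Section Main.
Variables (F : finFieldType) (m h : nat).
Hypotheses (hm : (0 < m)%N) (hh : (0 < h)%N) (hF : #|F| = (2 ^ (m * (2 * h)))%N).
Local Notation N := (m * (2 * h))%N.
Local Notation K := (G F (2 * m)).
Local Notation Fq := (G F m).

Lemma N0 : (0 < N)%N.
Proof. by rewrite !muln_gt0 hm hh. Qed.

Lemma eN : (2 * m * h = N)%N.
Proof. by rewrite mulnCA mulnA. Qed.

Lemma GN : #|G F N| = (2 ^ N)%N.
Proof. exact: GM_all hF. Qed.

Lemma inGN (x : F) : x \in G F N.
Proof. exact: (GT hF x). Qed.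

Lemma cK : #|K| = (2 ^ (2 * m))%N.
Proof. by apply: (cardG hF) N0 _; rewrite ?muln_gt0 ?hm // -eN dvdn_mulr. Qed.

Lemma cFq : #|Fq| = (2 ^ m)%N.
Proof. by apply: (cardG hF) N0 _; rewrite // dvdn_mulr. Qed.

Lemma FqK : Fq \subset K.
Proof. by apply/subsetP => x; apply: G_dvd; rewrite dvdn_mull. Qed.

Lemma TrE (x : F) : Tr m (2 * h) x = trs m (2 * h) x.
Proof. by rewrite /Tr /trs /qq; apply: eq_bigr => i _; rewrite expnM. Qed.

Lemma Tr2E (x : F) : Tr2 m (2 * h) x = trs (2 * m) h x.
Proof.
rewrite /Tr2 /trs /qq mul2n doubleK; apply: eq_bigr => i _.
by rewrite -expnM mulnA (mulnC m 2).
Qed.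

Lemma qlin1 (c : nat -> F) : qlin m (2 * h) c 1 = \sum_(i < h) c i.
Proof.
by rewrite /qlin mul2n doubleK; apply: eq_bigr => i _; rewrite expr1n mulr1.
Qed.

Definition phi (a b : F) k l (y : F) := a * y ^+ (2 ^ k) + b * y ^+ (2 ^ l).

Lemma Ladj_adj ck cl k l (x y : F) : (k < 2 * m)%N -> (l < 2 * m)%N -> k != l -> y \in K ->
  T N (Ladj m (2 * h) ck cl k l x * y)
  = T N (x * phi (qlin m (2 * h) ck 1) (qlin m (2 * h) cl 1) k l y).
Proof.
move=> hk hl kl hy.
rewrite /Ladj mulr_suml /T (trs_sum hF) -/(T _ _).
rewrite (eq_bigr (fun j : 'I_N => T N (x * (Lcoef m ck cl k l j * y ^+ (2 ^ j))))); last first.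
  move=> j _; rewrite /frob_inv -/(T N _) -[LHS](T_fr hF j); last exact: inGN.
  rewrite exprMn -frE subnK ?(ltnW (ltn_ord j)) // (fr_card hF).
  by congr (T _ _); ring.
rewrite -(trs_sum hF) -/(T _ _) -mulr_sumr; congr (T _ (x * _)).
rewrite (eq_bigr (fun j : 'I_N =>
    (if (j %% (2 * m) == k)%N then ck (j %/ (2 * m))%N else 0) * y ^+ (2 ^ k)
  + (if (j %% (2 * m) == l)%N then cl (j %/ (2 * m))%N else 0) * y ^+ (2 ^ l))); last first.
  move=> j _; rewrite (G_mod _ hy) /Lcoef.
  case: eqP => [->|jk]; first by rewrite (negbTE kl) mul0r addr0.
  by case: eqP => [->|jl]; rewrite ?mul0r ?add0r.
rewrite big_split /= -!mulr_suml /phi !qlin1.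
have eN' : N = (h * (2 * m))%N by rewrite -eN mulnC.
by rewrite eN' !sum_mod.
Qed.

Lemma phiD a b k l x y : phi a b k l (x + y) = phi a b k l x + phi a b k l y.
Proof. rewrite /phi !(frD hF); ring. Qed.

Lemma phi0 a b k l : phi a b k l 0 = 0.
Proof. by rewrite /phi !(fr0 F) !mulr0 addr0. Qed.

Lemma stepA ck cl k l : (k < l)%N -> (l < 2 * m)%N ->
  (forall x : F, Tr2 m (2 * h) (Ladj m (2 * h) ck cl k l x) = 0 -> Tr m (2 * h) x = 0) <->
  Fq \subset [set phi (qlin m (2 * h) ck 1) (qlin m (2 * h) cl 1) k l y | y in K].
Proof.
move=> kl l2m; have k2m : (k < 2 * m)%N by apply: ltn_trans kl l2m.
have kNl : k != l by rewrite neq_ltn kl.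
set a := qlin m (2 * h) ck 1; set b := qlin m (2 * h) cl 1.
set S2 := [set phi a b k l y | y in K].
have s1 : sgrp N Fq.
  split; [by apply/subsetP => x _; exact: inGN|exact: G0|by move=> x y; exact: (GD hF)].
have s2 : sgrp N S2.
  split; first by apply/subsetP => x _; exact: inGN.
    by apply/imsetP; exists 0; [exact: G0|rewrite phi0].
  move=> x y /imsetP[x1 hx1 ->] /imsetP[y1 hy1 ->].
  by apply/imsetP; exists (x1 + y1); [exact: (GD hF)|rewrite phiD].
have m2 : (0 < 2 * m)%N by rewrite muln_gt0 hm.
have tk2 : forall z, z \in G F N ->
    (trs (2 * m) h z = 0 <-> forall y, y \in K -> T N (z * y) = 0).
  move=> z hz; have := @trs_ker _ _ hF (2 * m) h z m2 hh; rewrite eN; apply => //.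
  exact: GN.
have tk1 : forall z, z \in G F N ->
    (trs m (2 * h) z = 0 <-> forall y, y \in Fq -> T N (z * y) = 0).
  move=> z hz; have h0 : (0 < 2 * h)%N by rewrite muln_gt0 hh.
  by have := @trs_ker _ _ hF m (2 * h) z hm h0; apply => //; exact: GN.
have h2 : forall x, x \in perp N S2 <-> Tr2 m (2 * h) (Ladj m (2 * h) ck cl k l x) = 0.
  move=> x; rewrite Tr2E; split.
    move/setIdP => [_ /forall_inP H]; apply/(tk2 _ (inGN _)) => y hy.
    by rewrite Ladj_adj //; apply/eqP/H; apply: imset_f.
  move=> H; apply/setIdP; split; first exact: inGN.
  apply/forall_inP => z /imsetP[y hy ->]; rewrite -Ladj_adj //.
  by move: H => /(tk2 _ (inGN _)) ->.
have h1 : forall x, x \in perp N Fq <-> Tr m (2 * h) x = 0.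
  move=> x; rewrite TrE; split.
    move/setIdP => [_ /forall_inP H]; apply/(tk1 _ (inGN _)) => y hy.
    by apply/eqP/H.
  move=> H; apply/setIdP; split; first exact: inGN.
  by apply/forall_inP => z hz; move: H => /(tk1 _ (inGN _)) ->.
rewrite (perp_iff hF N0 GN s1 s2); split.
  by move=> H; apply/subsetP => x /h2 /H /h1.
by move/subsetP => sub x /h2 /sub /h1.
Qed.

End Main.

From mathcomp Require Import all_boot all_algebra all_field.
From mathcomp Require Import zify ring.
Set Implicit Arguments. Unset Strict Implicit. Unset Printing Implicit Defensive.
Import GRing.Theory.
Local Open Scope ring_scope.

Section Core.
Variables (F : finFieldType) (m h : nat).
Hypotheses (hm : (0 < m)%N) (hh : (0 < h)%N) (hF : #|F| = (2 ^ (m * (2 * h)))%N).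
Local Notation N := (m * (2 * h))%N.
Local Notation K := (G F (2 * m)).
Local Notation Fq := (G F m).

Definition psi (a b : F) d (z : F) := a * z + b * z ^+ (2 ^ d).

Lemma add_eq (x y : F) : x + y = 0 -> x = y.
Proof. by move/eqP; rewrite addr_eq0 (oppE hF) => /eqP. Qed.

Lemma eq_add (x y : F) : x = y -> x + y = 0.
Proof. by move->; rewrite (add2 hF). Qed.

Lemma lin2 (a b a' b' z w c : F) : c = a * z + b * w -> c = a' * z + b' * w ->
  (a' * b + a * b') * z = c * (b' + b) /\ (a' * b + a * b') * w = c * (a' + a).
Proof.
move=> E1 E2; split.
  rewrite mulrDr {1}E1 {1}E2.
  rewrite [RHS](_ : _ = (a' * b + a * b') * z + (b * b' * w + b * b' * w)); last by ring.
  by rewrite (add2 hF) addr0.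
  rewrite mulrDr {1}E1 {1}E2.
rewrite [RHS](_ : _ = (a' * b + a * b') * w + (a * a' * z + a * a' * z)); last by ring.
by rewrite (add2 hF) addr0.
Qed.

Lemma frK (x : F) : x \in K -> x ^+ (2 ^ (2 * m)) = x.
Proof. by rewrite inG => /eqP. Qed.

Lemma caseA_fwd a b d : (0 < d)%N -> (d < 2 * m)%N ->
  ~~ ((a \in K) && (b \in K)) -> Fq \subset [set psi a b d z | z in K] ->
  let delta := a ^+ (2 ^ (2 * m)) * b + a * b ^+ (2 ^ (2 * m)) in
  [/\ d = m, a \notin K, delta != 0,
      delta ^+ (2 ^ m) * (a ^+ (2 ^ (2 * m)) + a)
        + delta * (b ^+ (2 ^ (3 * m)) + b ^+ (2 ^ m)) = 0
    & delta ^+ (2 ^ m) * (b ^+ (2 ^ (2 * m)) + b)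
        + delta * (a ^+ (2 ^ (3 * m)) + a ^+ (2 ^ m)) = 0].
Proof.
move=> d0 d2m nK /subsetP sub delta.
set A := a ^+ (2 ^ (2 * m)) + a; set B := b ^+ (2 ^ (2 * m)) + b.
have key : forall c, c \in Fq -> exists2 z, z \in K &
    delta * z = c * B /\ delta * z ^+ (2 ^ d) = c * A.
  move=> c hc; have /imsetP[z hz ec] := sub c hc.
  have ec2 := ec; exists z => //; apply: lin2 ec2 _.
  have hcK : c \in K by apply: (subsetP (FqK F m)).
  rewrite -{1}(frK hcK) ec (frD hF) !exprMn (frK hz).
  by rewrite (frK (G_fr _ hz)).
have [z1 hz1 [e1 e2]] := key 1 (G1 _ _).
rewrite !mul1r in e1 e2.
have ndelta : delta != 0.
  apply/eqP => dl0; move: nK; rewrite dl0 !mul0r in e1 e2.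
  by rewrite !inG (add_eq (esym e1)) (add_eq (esym e2)) !eqxx.
have naK : a \notin K.
  apply/negP => aK; move: e2; rewrite /A (eq_add (frK aK)) => /eqP.
  rewrite mulf_eq0 (negbTE ndelta) /= (fr_eq0 d) => /eqP z10.
  move: e1; rewrite z10 mulr0 => /esym /add_eq bK.
  by move: nK; rewrite aK inG bK eqxx.
have hA : A != 0.
  apply: contra naK => /eqP A0; by rewrite inG (add_eq A0).
have w1nz : z1 ^+ (2 ^ d) != 0.
  by apply: contra hA => /eqP w0; rewrite -e2 w0 mulr0.
have dm : d = m.
  have sub2 : Fq \subset G F d.
    apply/subsetP => c hc; have [z hz [f1 f2]] := key c hc.
    have ez : z = c * z1 by apply: (mulfI ndelta); rewrite f1 -e1 mulrCA.
    have f3 : delta * (c ^+ (2 ^ d) * z1 ^+ (2 ^ d)) = delta * (c * z1 ^+ (2 ^ d)).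
      by rewrite -exprMn -ez f2 -e2 mulrCA.
    have f4 := mulIf w1nz (mulfI ndelta f3).
    by rewrite inG f4.
  have N00 : (0 < N)%N by apply: N0.
  have := G_sub_card hF hm d0 N00 (dvdn_mulr _ (dvdnn m)) sub2.
  case/dvdnP=> j ej; move: d0 d2m; rewrite ej.
  case: j {ej} => [|[|j]]; rewrite ?mul0n ?mul1n // => _; nia.
subst d.
have e3 : (3 * m = 2 * m + m)%N by lia.
have AB : forall x : F, x ^+ (2 ^ (3 * m)) + x ^+ (2 ^ m)
    = (x ^+ (2 ^ (2 * m)) + x) ^+ (2 ^ m).
  by move=> x; rewrite (frD hF) e3 frE.
split => //; rewrite !AB -/A -/B -e1 -e2.
  by apply: eq_add; rewrite !exprMn; ring.
apply: eq_add; rewrite !exprMn -frE addnn -mul2n (frK hz1); ring.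
Qed.

Lemma ABq (x : F) : x ^+ (2 ^ (3 * m)) + x ^+ (2 ^ m)
    = (x ^+ (2 ^ (2 * m)) + x) ^+ (2 ^ m).
Proof. by rewrite (frD hF) (_ : 3 * m = 2 * m + m)%N ?frE //; lia. Qed.

Lemma case1_bwd a b d :
  let delta := a ^+ (2 ^ (2 * m)) * b + a * b ^+ (2 ^ (2 * m)) in
  d = m -> delta != 0 ->
      delta ^+ (2 ^ m) * (a ^+ (2 ^ (2 * m)) + a)
        + delta * (b ^+ (2 ^ (3 * m)) + b ^+ (2 ^ m)) = 0 ->
      delta ^+ (2 ^ m) * (b ^+ (2 ^ (2 * m)) + b)
        + delta * (a ^+ (2 ^ (3 * m)) + a ^+ (2 ^ m)) = 0 ->
  Fq \subset [set psi a b d z | z in K].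
Proof.
move=> delta -> nd; rewrite !ABq.
set A := a ^+ (2 ^ (2 * m)) + a; set B := b ^+ (2 ^ (2 * m)) + b.
move=> /add_eq eq1 /add_eq eq2.
have ndq : delta ^+ (2 ^ m) != 0 by rewrite expf_neq0.
set u := B / delta.
have hu1 : delta * u = B by rewrite mulrC divfK.
clearbody u.
have hu2 : delta * u ^+ (2 ^ m) = A.
  apply: (mulfI ndq); rewrite eq1 -hu1 exprMn; ring.
have huK : u \in K.
  rewrite inG; apply/eqP; apply: (mulfI ndq); apply: (mulfI nd).
  rewrite mul2n -addnn frE.
  rewrite [RHS](_ : _ = delta ^+ (2 ^ m) * B); last by rewrite -hu1; ring.
  by rewrite eq2 -hu2 exprMn; ring.
have hsum : a * u + b * u ^+ (2 ^ m) = 1.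
  apply: (mulfI nd); rewrite mulr1 mulrDr mulrCA hu1 mulrCA hu2 /A /B /delta.
  rewrite [LHS](_ : _ = a ^+ (2 ^ (2 * m)) * b + a * b ^+ (2 ^ (2 * m)) + (a * b + a * b)); last by ring.
  by rewrite (add2 hF) addr0.
apply/subsetP => c hc; apply/imsetP; exists (c * u).
  by apply: GM => //; apply: (subsetP (FqK F m)).
move: hc; rewrite inG => /eqP hc.
rewrite /psi exprMn hc -[LHS]mulr1 -hsum; ring.
Qed.

Lemma pow_sub1 s (x : F) : x != 0 -> (x ^+ (2 ^ s) == x) = (x ^+ (2 ^ s - 1) == 1).
Proof.
move=> x0; have p : (2 ^ s = (2 ^ s - 1).+1)%N by rewrite subn1 prednK // expn_gt0.
rewrite {1}p exprSr; apply/eqP/eqP => [hh1|->]; last by rewrite mul1r.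
by apply: (mulIf x0); rewrite mul1r.
Qed.

Lemma two_pow_gt1 s : (0 < s)%N -> (1 < 2 ^ s)%N.
Proof. by move=> s0; rewrite -{1}(expn0 2) ltn_exp2l. Qed.

Section WithD.
Variable d : nat.
Hypotheses (d0 : (0 < d)%N) (d2m : (d < 2 * m)%N).
Local Notation e := (gcdn d (2 * m)).
Local Notation g := (2 ^ e - 1)%N.
Local Notation D := (2 ^ d - 1)%N.
Local Notation E := ((2 ^ (2 * m) - 1) %/ (2 ^ e - 1))%N.

Lemma e0 : (0 < e)%N.
Proof. by rewrite gcdn_gt0 d0. Qed.

Lemma eN' : (e %| N)%N.
Proof. by apply: dvdn_trans (dvdn_gcdr _ _) _; rewrite -(eN m h) dvdn_mulr. Qed.

Lemma cGe : #|G F e| = (2 ^ e)%N.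
Proof. by apply: (cardG hF) e0 _ eN'; apply: N0. Qed.

Lemma g0 : (0 < g)%N.
Proof. by rewrite subn_gt0 two_pow_gt1 // e0. Qed.

Lemma gE : (2 ^ (2 * m) - 1 = E * g)%N.
Proof. by rewrite divnK // dvd_pow_sub1' // dvdn_gcdr. Qed.

Lemma gD : (D = D %/ g * g)%N.
Proof. by rewrite divnK // dvd_pow_sub1' // dvdn_gcdl. Qed.

Lemma E0 : (0 < E)%N.
Proof.
have := gE; have := g0; have : (1 < 2 ^ (2 * m))%N by rewrite two_pow_gt1 // muln_gt0 hm.
move: g => G1 h1 h2 h3; nia.
Qed.

Lemma K_unit (z : F) : z \in K -> z != 0 -> z ^+ (2 ^ (2 * m) - 1) = 1.
Proof. by move=> hz z0; apply/eqP; rewrite -pow_sub1 // -inG. Qed.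

Lemma in_Ge (z : F) : z \in K -> z ^+ (2 ^ d) = z -> z \in G F e.
Proof. by move=> hz hd; apply: G_gcd => //; rewrite inG hd. Qed.

Lemma power_onto (u : F) : u \in K -> u != 0 -> u ^+ E = 1 ->
  exists z, [/\ z \in K, z != 0 & z ^+ D = u].
Proof.
move=> uK u0 uE.
set Kx := [set x in K | x != 0].
set Kr := [set z in Kx | z ^+ D == 1].
set f := fun z : F => z ^+ D.
have hfib : #|Kx| = (#|f @: Kx| * #|Kr|)%N.
  apply: (card_fib (op := fun x0 z => x0 * z)) => [x0 /setIdP[_ x00]|x0 /setIdP[x0K x00]].
    exact: mulfI.
  apply/setP => x; apply/setIdP/imsetP.
    move=> [/setIdP[xK x_0] /eqP fx]; exists (x / x0); last by rewrite mulrC divfK.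
    apply/setIdP; split; first by apply/setIdP; split; [apply: GM => //; exact: GV|rewrite mulf_neq0 ?invr_eq0].
    by move: fx; rewrite /f => fx; rewrite exprMn fx exprVn divff // expf_neq0.
  move=> [z /setIdP[/setIdP[zK z_0] /eqP fz] ->]; split.
    by apply/setIdP; split; [exact: GM|rewrite mulf_neq0].
  by rewrite /f exprMn fz mulr1.
have cKx : #|Kx| = (2 ^ (2 * m) - 1)%N.
  have := cardsD1 0 K; rewrite G0 (cK hm hh hF) add1n => ->.
  rewrite subn1 /=; apply: eq_card => x; rewrite !inE; apply: andbC.
have cKr : (#|Kr| <= g)%N.
  apply: (roots_le (r := -1)); first by rewrite size_polyN size_poly1 g0.
  move=> z /setIdP[/setIdP[zK z_0] /eqP zD].
  have : z \in G F e.
    apply: in_Ge => //; apply/eqP; rewrite pow_sub1 //; exact/eqP.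
  by rewrite inG pow_sub1 // => /eqP ->; rewrite hornerN hornerC subrr.
set U := [set v in Kx | v ^+ E == 1].
have sub : f @: Kx \subset U.
  apply/subsetP => v /imsetP[z /setIdP[zK z0] ->]; apply/setIdP; split.
    by apply/setIdP; split; [exact: GX|rewrite expf_neq0].
  by rewrite /f -exprM gD -mulnA (mulnC (2 ^ e - 1)%N) -gE mulnC exprM K_unit // expr1n.
have cU : (#|U| <= E)%N.
  apply: (roots_le (r := -1)); first by rewrite size_polyN size_poly1 E0.
  by move=> v /setIdP[_ /eqP ->]; rewrite hornerN hornerC subrr.
have : U \subset f @: Kx.
  rewrite -(eqP (_ : f @: Kx == U)) //; rewrite eqEcard sub /=.
  apply: (leq_trans cU); move: hfib cKr; rewrite cKx gE.
  have := g0; move: #|Kr| #|f @: Kx| => r i g00 h1 h2; nia.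
move/subsetP => /(_ u); rewrite inE inE uK u0 uE eqxx => /(_ isT).
move/imsetP => [z /setIdP[zK z0] ->]; by exists z.
Qed.

Lemma zDE (z : F) : z \in K -> z != 0 -> z ^+ (D * E) = 1.
Proof.
move=> zK z0.
by rewrite gD -mulnA (mulnC (2 ^ e - 1)%N) -gE mulnC exprM K_unit // expr1n.
Qed.

Lemma psiD (a b x y : F) : psi a b d (x + y) = psi a b d x + psi a b d y.
Proof. rewrite /psi (frD hF); ring. Qed.

Lemma psiK (a b z : F) : a \in K -> b \in K -> z \in K -> psi a b d z \in K.
Proof. by move=> aK bK zK; rewrite /psi; apply: (GD hF); apply: GM => //; exact: GX. Qed.

Lemma expD1 (z : F) : z ^+ (2 ^ d) = z ^+ D * z.
Proof. by rewrite -exprSr subn1 prednK // expn_gt0. Qed.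

Lemma B1 (a b : F) : a \in K -> b \in K ->
  (forall z, z \in K -> psi a b d z = 0 -> z = 0) ->
  Fq \subset [set psi a b d z | z in K].
Proof.
move=> aK bK inj.
have sub : [set psi a b d z | z in K] \subset K.
  by apply/subsetP => y /imsetP[z zK ->]; exact: psiK.
have c : #|[set psi a b d z | z in K]| = #|K|.
  apply: card_in_imset => x y xK yK exy; apply: add_eq; apply: inj.
    exact: (GD hF).
  by rewrite psiD exy (add2 hF).
have -> : [set psi a b d z | z in K] = K by apply/eqP; rewrite eqEcard sub c leqnn.
exact: FqK.
Qed.

Lemma B2 (a b : F) : a \in K -> b \in K ->
  (forall z, z \in K -> psi a b d z = 0 -> z = 0) <-> a ^+ E != b ^+ E.
Proof.
move=> aK bK; split.
  move=> inj; apply/negP => /eqP eE.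
  have E00 := E0.
  have z0E : (0 : F) ^+ E = 0 by rewrite -(prednK E00) exprS mul0r.
  have [a0|a0] := eqVneq a 0.
    move: eE; rewrite a0 z0E => /esym/eqP; rewrite expf_eq0 E00 /= => /eqP b0.
    have := inj 1 (G1 _ _); rewrite /psi a0 b0 !mul0r addr0 => /(_ erefl) /eqP.
    by rewrite oner_eq0.
  have [b0|b0] := eqVneq b 0.
    by move: eE; rewrite b0 z0E => /eqP; rewrite expf_eq0 E00 /= (negbTE a0).
  have uK : a / b \in K by apply: GM => //; exact: GV.
  have uE : (a / b) ^+ E = 1 by rewrite exprMn exprVn eE divff // expf_neq0.
  have [z [zK z0 zD]] := power_onto uK (mulf_neq0 a0 (invr_neq0 b0)) uE.
  have := inj z zK; rewrite /psi expD1 zD mulrA (mulrC b) divfK // (add2 hF) => /(_ erefl).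
  by move/eqP; rewrite (negbTE z0).
move=> nE z zK /add_eq pz; apply/eqP; apply: contraNT nE => z0.
have [b0|b0] := eqVneq b 0.
  move: pz; rewrite b0 mul0r => /eqP; rewrite mulf_eq0 (negbTE z0) orbF => /eqP ->.
  by rewrite eqxx.
move: pz; rewrite expD1 mulrA => /(mulIf z0) ->.
by rewrite exprMn -exprM zDE // mulr1.
Qed.

Lemma B3 (a b z0 : F) : a \in K -> b \in K -> a != 0 -> b != 0 ->
  z0 \in K -> z0 != 0 -> psi a b d z0 = 0 ->
  (Fq \subset [set psi a b d z | z in K] <->
   (e %| m)%N /\ a ^+ ((2 ^ d * (2 ^ m - 1)) %/ g) = b ^+ ((2 ^ m - 1) %/ g)).
Proof.
move=> aK bK a0 b0 z0K z00 /add_eq pz.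
set t := a * z0.
have tK : t \in K by exact: GM.
have t0 : t != 0 by rewrite mulf_neq0.
have hb : b * z0 ^+ (2 ^ d) = t by rewrite -pz.
have ha : a = b * z0 ^+ D.
  by apply: (mulIf z00); rewrite -/t -hb expD1 mulrA.
pose chi (u : F) := u + u ^+ (2 ^ d).
have psi_chi : forall u, psi a b d (z0 * u) = t * chi u.
  by move=> u; rewrite /psi /chi exprMn mulrA -/t mulrA hb; ring.
set S1 := [set c / t | c in Fq]; set S2 := [set chi u | u in K].
have m2 : (0 < 2 * m)%N by rewrite muln_gt0 hm.
have cK' : #|G F (2 * m)| = (2 ^ (2 * m))%N := cK hm hh hF.
have step1 : Fq \subset [set psi a b d z | z in K] <-> S1 \subset S2.
  split => /subsetP sub; apply/subsetP.
    move=> y /imsetP[c cq ->]; have /imsetP[z zK ->] := sub c cq.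
    apply/imsetP; exists (z / z0); first by apply: GM => //; exact: GV.
    rewrite {1}(_ : z = z0 * (z / z0)); last by rewrite mulrC divfK.
    by rewrite psi_chi mulrC mulKf.
  move=> c cq; have /imsetP[u uK eu] := sub (c / t) (imset_f _ cq).
  apply/imsetP; exists (z0 * u); first exact: GM.
  by rewrite psi_chi -eu mulrC divfK.
have chiD : forall x y, chi (x + y) = chi x + chi y.
  by move=> x y; rewrite /chi (frD hF); ring.
have s1 : sgrp (2 * m) S1.
  split.
  - apply/subsetP => y /imsetP[c cq ->]; apply: GM; last exact: GV.
    exact: (subsetP (FqK F m)).
  - by apply/imsetP; exists 0; [exact: G0|rewrite mul0r].
  - move=> x y /imsetP[c cq ->] /imsetP[c' cq' ->]; apply/imsetP; exists (c + c').
      exact: (GD hF).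
    by rewrite mulrDl.
have s2 : sgrp (2 * m) S2.
  split.
  - apply/subsetP => y /imsetP[u uK ->]; apply: (GD hF) => //; exact: GX.
  - by apply/imsetP; exists 0; [exact: G0|rewrite /chi (fr0 F) addr0].
  - move=> x y /imsetP[u uK ->] /imsetP[u' uK' ->]; apply/imsetP; exists (u + u').
      exact: (GD hF).
    by rewrite chiD.
rewrite step1 (perp_iff hF m2 cK' s1 s2).
have GeK : G F e \subset K.
  by apply/subsetP => v; apply: G_dvd; exact: dvdn_gcdr.
have step3 : perp (2 * m) S2 = G F e.
  apply/setP => v; apply/idP/idP.
    move/setIdP => [vK /forall_inP H].
    set v' := v ^+ (2 ^ (2 * m - d)).
    have v'K : v' \in K by exact: GX.
    have vv' : v' ^+ (2 ^ d) = v by rewrite -frE subnK ?(ltnW d2m) // frK.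
    have hT : forall u, u \in K -> T (2 * m) ((v + v') * u) = 0.
      move=> u uK; have := eqP (H (chi u) (imset_f _ uK)).
      rewrite /chi mulrDr mulrDl !(TD hF) => <-; congr (_ + _).
      by rewrite -(T_fr hF d) ?exprMn ?vv' //; exact: GM.
    have e0' : v + v' = 0.
      apply/eqP; apply: contraT => nz.
      have [u uK Tu] := T_nd hF m2 cK' (GD hF vK v'K) nz.
      by move: (hT u uK); rewrite Tu => /eqP; rewrite oner_eq0.
    apply: in_Ge => //; by rewrite {1}(add_eq e0') vv'.
  move=> ve; have vK : v \in K by apply: (subsetP GeK).
  have vd : v ^+ (2 ^ d) = v by apply/eqP; rewrite -inG; exact: (G_dvd (dvdn_gcdl _ _) ve).
  apply/setIdP; split => //; apply/forall_inP => y /imsetP[u uK ->].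
  rewrite /chi mulrDr (TD hF) -{2}vd -exprMn (T_fr hF) ?(add2 hF) //; exact: GM.
have step4 : forall v, v \in K -> (v \in perp (2 * m) S1) = ((v / t) ^+ (2 ^ m) == v / t).
  move=> v vK; have vt : v / t \in K by apply: GM => //; exact: GV.
  have tk : trs m 2 (v / t) = 0 <-> forall y, y \in Fq -> T (2 * m) (v / t * y) = 0.
    have := @trs_ker _ _ hF m 2 (v / t) hm isT; rewrite (mulnC m 2); apply => //.
  have tr2 : trs m 2 (v / t) = v / t + (v / t) ^+ (2 ^ m).
    by rewrite /trs !big_ord_recl big_ord0 /= muln0 muln1 expn0 expr1 addr0.
  have ee : forall y, v * (y / t) = v / t * y by move=> y; rewrite mulrA mulrAC.
  apply/idP/idP.
    move/setIdP => [_ /forall_inP H].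
    have : trs m 2 (v / t) = 0.
      apply/tk => y yq; have := H (y / t) (imset_f _ yq); rewrite ee; exact: eqP.
    by rewrite tr2 => /add_eq e; rewrite -e.
  move=> /eqP H; apply/setIdP; split => //; apply/forall_inP => y /imsetP[c cq ->].
  rewrite ee; apply/eqP; apply: (tk.1 _ c cq); by rewrite tr2 H (add2 hF).
rewrite step3.
have q0 : (0 < 2 ^ m)%N by rewrite expn_gt0.
have hGe : G F e \subset perp (2 * m) S1 <-> t ^+ (2 ^ m) = t /\ G F e \subset Fq.
  split.
    move/subsetP => sub.
    have tq : t ^+ (2 ^ m) = t.
      have := sub 1 (G1 _ _); rewrite step4 ?G1 // !mul1r exprVn => /eqP.
      exact: invr_inj.
    split => //; apply/subsetP => v ve.
    have := sub v ve; rewrite step4 ?(subsetP GeK) // exprMn exprVn tq => /eqP.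
    by move/(mulIf (invr_neq0 t0)) => vq; rewrite inG vq.
  move=> [tq /subsetP sub]; apply/subsetP => v ve.
  rewrite step4 ?(subsetP GeK) // exprMn exprVn tq.
  by have := sub v ve; rewrite inG => /eqP ->.
have hem : G F e \subset Fq <-> (e %| m)%N.
  split; first exact: (G_sub_card hF e0 hm (N0 hm hh) eN').
  by move=> em; apply/subsetP => v; apply: G_dvd.
rewrite hGe hem.
suff rel : (e %| m)%N -> (t ^+ (2 ^ m) = t <->
    a ^+ ((2 ^ d * (2 ^ m - 1)) %/ g) = b ^+ ((2 ^ m - 1) %/ g)).
  split => [[tq em]|[em r]]; split => //; by apply/(rel em).
move=> em.
have gq : (g %| 2 ^ m - 1)%N by apply: dvd_pow_sub1'.
set Q := ((2 ^ m - 1) %/ g)%N.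
have eQ : (Q * g = 2 ^ m - 1)%N by rewrite divnK.
rewrite -muln_divA // -/Q exprM.
have aD : a ^+ (2 ^ d) = b * t ^+ D.
  by rewrite expD1 /t exprMn mulrCA -ha mulrC.
rewrite aD (exprMn _ b).
have bQ : b ^+ Q != 0 by rewrite expf_neq0.
have tDQ : (t ^+ D) ^+ Q = (t ^+ (2 ^ m - 1)) ^+ (D %/ g).
  rewrite -!exprM; congr (_ ^+ _); rewrite -eQ {1}gD.
  by rewrite mulnAC [RHS]mulnC mulnA.
suff key : (t ^+ D) ^+ Q = 1 <-> t ^+ (2 ^ m) = t.
  split; first by move=> tq; rewrite (key.2 tq) mulr1.
  by move=> hh1; apply: key.1; apply: (mulfI bQ); rewrite mulr1.
rewrite tDQ; split; last first.
  move=> tq; have : t ^+ (2 ^ m - 1) = 1 by apply/eqP; rewrite -pow_sub1 // tq.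
  by move->; rewrite expr1n.
move=> uD.
set u := t ^+ (2 ^ m - 1).
have u0 : u != 0 by rewrite expf_neq0.
have uK : u \in K by exact: GX.
have uDD : u ^+ D = 1 by rewrite gD exprM; move: uD; rewrite -/u => ->; rewrite expr1n.
have ue : u \in G F e by apply: in_Ge => //; apply/eqP; rewrite pow_sub1 // uDD.
have uq : u ^+ (2 ^ m) = u by apply/eqP; rewrite -inG; exact: G_dvd ue.
have uu : u * u = 1.
  rewrite -{1}uq -exprSr -exprM.
  have -> : ((2 ^ m - 1) * (2 ^ m).+1 = 2 ^ (2 * m) - 1)%N.
    by rewrite mul2n -addnn expnD -(addn1 (2 ^ m)) -subn_sqr exp1n mulnn.
  exact: K_unit.
have : (u + 1) ^+ 2 = 0 by rewrite (sqrD hF) expr2 uu expr1n (add2 hF).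
move/eqP; rewrite expf_eq0 /= => /eqP /add_eq u1.
by apply/eqP; rewrite pow_sub1 // -/u u1.
Qed.

End WithD.

Lemma core (a b : F) d : (0 < d)%N -> (d < 2 * m)%N ->
  let e := gcdn d (2 * m) in
  let delta := a ^+ (2 ^ (2 * m)) * b + a * b ^+ (2 ^ (2 * m)) in
  Fq \subset [set psi a b d z | z in K] <->
  [\/ [/\ d = m, a ^+ (2 ^ (2 * m)) != a, delta != 0,
          delta ^+ (2 ^ m) * (a ^+ (2 ^ (2 * m)) + a)
            + delta * (b ^+ (2 ^ (3 * m)) + b ^+ (2 ^ m)) = 0
        & delta ^+ (2 ^ m) * (b ^+ (2 ^ (2 * m)) + b)
            + delta * (a ^+ (2 ^ (3 * m)) + a ^+ (2 ^ m)) = 0],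
      [/\ a ^+ (2 ^ (2 * m)) = a, b ^+ (2 ^ (2 * m)) = b
        & a ^+ ((2 ^ (2 * m) - 1) %/ (2 ^ e - 1)) != b ^+ ((2 ^ (2 * m) - 1) %/ (2 ^ e - 1))]
    | [/\ (e %| m)%N, a ^+ (2 ^ (2 * m)) = a /\ a != 0, b ^+ (2 ^ (2 * m)) = b /\ b != 0
        & a ^+ ((2 ^ d * (2 ^ m - 1)) %/ (2 ^ e - 1)) = b ^+ ((2 ^ m - 1) %/ (2 ^ e - 1))]].
Proof.
move=> d0 d2m e delta.
have [/andP[aK bK]|nK] := boolP ((a \in K) && (b \in K)); last first.
  have n2 : ~ (a ^+ (2 ^ (2 * m)) = a /\ b ^+ (2 ^ (2 * m)) = b).
    by move=> [ea eb]; move: nK; rewrite !inG ea eb !eqxx.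
  split.
    move=> sub; apply: Or31.
    have [? ? ? ? ?] := caseA_fwd d0 d2m nK sub.
    by split => //; rewrite -inG.
  case => [[dm na nd e1 e2]|[ea eb _]|[_ [ea _] [eb _] _]].
  - exact: (case1_bwd dm nd e1 e2).
  - by case: n2.
  - by case: n2.
have ea := frK aK; have eb := frK bK.
have [inj|ninj] := boolP [forall z in K, (psi a b d z == 0) ==> (z == 0)].
  have inj' : forall z, z \in K -> psi a b d z = 0 -> z = 0.
    by move=> z zK pz; apply/eqP; move/forall_inP: inj => /(_ z zK) /implyP; apply; apply/eqP.
  have h2 := (B2 d0 d2m aK bK).1 inj'.
  split => _; last exact: B1.
  by apply: Or32; split.
have [z0 [z0K pz z00]] : exists z0, [/\ z0 \in K, psi a b d z0 = 0 & z0 != 0].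
  move: ninj; rewrite negb_forall_in => /existsP[z /andP[zK]].
  by rewrite negb_imply => /andP[/eqP pz nz]; exists z.
have n2 : ~ (a ^+ ((2 ^ (2 * m) - 1) %/ (2 ^ e - 1)) != b ^+ ((2 ^ (2 * m) - 1) %/ (2 ^ e - 1))).
  by move/(B2 d0 d2m aK bK) => /(_ z0 z0K pz) /eqP; rewrite (negbTE z00).
have [ab0|] := boolP ((a == 0) || (b == 0)).
  have [a0 b0] : a = 0 /\ b = 0.
    have w0 : z0 ^+ (2 ^ d) != 0 by rewrite expf_neq0.
    case/orP: ab0 => /eqP x0.
      by move: pz; rewrite /psi x0 mul0r add0r => /eqP; rewrite mulf_eq0 (negbTE w0) orbF => /eqP.
    by move: pz; rewrite /psi x0 mul0r addr0 => /eqP; rewrite mulf_eq0 (negbTE z00) orbF => /eqP.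
  split.
    move/subsetP => /(_ 1 (G1 _ _)) /imsetP[z _].
    by rewrite /psi a0 b0 !mul0r addr0 => /eqP; rewrite oner_eq0.
  case => [[_ na _ _ _]|[_ _ ne]|[_ [_ na] _ _]].
  - by rewrite ea eqxx in na.
  - by case: n2.
  - by rewrite a0 eqxx in na.
rewrite negb_or => /andP[a0 b0].
rewrite (B3 d0 d2m aK bK a0 b0 z0K z00 pz); split.
  by move=> [em rel]; apply: Or33; split.
case => [[_ na _ _ _]|[_ _ ne]|[em _ _ rel]].
all: first [by rewrite ea eqxx in na | by case: n2 | by split].
Qed.

End Core.

From mathcomp Require Import all_boot all_algebra all_field.
From mathcomp Require Import zify ring.
Set Implicit Arguments. Unset Strict Implicit. Unset Printing Implicit Defensive.
Import GRing.Theory.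
Local Open Scope ring_scope.

Lemma phi_psi (F : finFieldType) m (a b : F) k l : (k < l)%N -> (l < 2 * m)%N ->
  [set phi a b k l y | y in G F (2 * m)] = [set psi a b (l - k) z | z in G F (2 * m)].
Proof.
move=> kl l2m; have k2m : (k <= 2 * m)%N by apply: ltnW; apply: ltn_trans kl l2m.
have el : l = (k + (l - k))%N by rewrite subnKC // ltnW.
apply/setP => x; apply/imsetP/imsetP => [[y yK ->]|[z zK ->]].
  exists (y ^+ (2 ^ k)); first exact: GX.
  by rewrite /phi /psi -frE -el.
exists (z ^+ (2 ^ (2 * m - k))); first exact: GX.
rewrite /phi /psi -!frE subnK // (frK zK).
have -> : (2 * m - k + l = 2 * m + (l - k))%N by lia.
by rewrite frE (frK zK).
Qed.

Unset Implicit Arguments.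

Theorem mainTheorem11 (F : finFieldType) (m n k l : nat)
    (ck cl : nat -> F)
    (hm : (1 <= m)%N) (hn : ~~ odd n) (hF : #|F| = (2 ^ (m * n))%N)
    (hkl : (k < l)%N) (hl : (l < 2 * m)%N) :
  let q := (2 ^ m)%N in
  let e := gcdn (l - k) (2 * m) in
  let a := qlin m n ck 1 in
  let b := qlin m n cl 1 in
  let delta := a ^+ (q ^ 2) * b + a * b ^+ (q ^ 2) in
  (forall x : F, Tr2 m n (Ladj m n ck cl k l x) = 0 -> Tr m n x = 0)
  <->
  [\/ [/\ (l - k)%N = m, a ^+ (q ^ 2) != a, delta != 0,
          delta ^+ q * (a ^+ (q ^ 2) + a) + delta * (b ^+ (q ^ 3) + b ^+ q) = 0
        & delta ^+ q * (b ^+ (q ^ 2) + b) + delta * (a ^+ (q ^ 3) + a ^+ q) = 0],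
      [/\ a ^+ (q ^ 2) = a, b ^+ (q ^ 2) = b
        & a ^+ ((q ^ 2 - 1) %/ (2 ^ e - 1)) != b ^+ ((q ^ 2 - 1) %/ (2 ^ e - 1))]
    | [/\ (e %| m)%N, a ^+ (q ^ 2) = a /\ a != 0, b ^+ (q ^ 2) = b /\ b != 0
        & a ^+ ((2 ^ (l - k) * (q - 1)) %/ (2 ^ e - 1)) = b ^+ ((q - 1) %/ (2 ^ e - 1))]].
Proof.
have en : n = (2 * n./2)%N by rewrite -{1}(odd_double_half n) (negbTE hn) add0n mul2n.
move: en hF hn; set h := n./2; clearbody h => en; subst n => hF _.
have hh : (0 < h)%N.
  have := finNzRing_gt1 F; rewrite hF; case: h {hF} => //.
  by rewrite !muln0 expn0.
move=> q e a b delta.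
have q2 : (q ^ 2 = 2 ^ (2 * m))%N by rewrite /q -expnM mulnC.
have q3 : (q ^ 3 = 2 ^ (3 * m))%N by rewrite /q -expnM mulnC.
rewrite /delta !q2 !q3 /q.
rewrite (stepA hm hh hF ck cl hkl hl) -/a -/b (phi_psi a b hkl hl).
have d0 : (0 < l - k)%N by rewrite subn_gt0.
have d2m : (l - k < 2 * m)%N by apply: leq_ltn_trans (leq_subr _ _) hl.
exact: (core hm hh hF a b d0 d2m).
Qed.
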